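(* Let $n=2k$. Let $g$ be a bent Boolean function on $\mathbb{F}_{2^n}$ whose dual $g^*$ satisfies property $(\mathbf{P}_\tau)$ with defining set $\{u_1,\ldots,u_\tau\}$, i.e. $u_1,\ldots,u_\tau\in\mathbb{F}_{2^n}$ are pairwise distinct and $D_{u_i}D_{u_j}g^*=0$ for all $1\le i<j\le\tau$. Let $F(X_1,\ldots,X_\tau)$ be any reduced polynomial in $\mathbb{F}_2[X_1,\ldots,X_\tau]$. Then the Boolean function $g(x)+F(\mathrm{Tr}^n_1(u_1x),\ldots,\mathrm{Tr}^n_1(u_\tau x))$ is bent, with dual $g^*(x)+F(D_{u_1}g^*(x),\ldots,D_{u_\tau}g^*(x))$.
   Context: $\mathrm{Tr}^n_1(x)=\sum_{i=0}^{n-1}x^{2^i}$. For a Boolean function $f$ on $\mathbb{F}_{2^n}$, $W_f(a)=\sum_x(-1)^{f(x)+\mathrm{Tr}^n_1(ax)}$; $f$ is bent if $|W_f(a)|=2^{n/2}$ for all $a$, with dual $f^*$ defined by $W_f(a)=2^{n/2}(-1)^{f^*(a)}$. $D_af(x)=f(x)+f(x+a)$, $D_aD_bf(x)=f(x)+f(x+a)+f(x+b)+f(x+a+b)$. A reduced polynomial in $\mathbb{F}_2[X_1,\ldots,X_\tau]$ is one of the form $\sum_{I\subseteq\{1,\ldots,\tau\}}a_I\prod_{i\in I}X_i$, $a_I\in\mathbb{F}_2$. *)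

(* Defs.v *)
From mathcomp Require Import all_boot all_order all_algebra all_field.
Set Implicit Arguments. Unset Strict Implicit. Unset Printing Implicit Defensive.
Import GRing.Theory Num.Theory.
Local Open Scope ring_scope.

Definition trace (F : finFieldType) (n : nat) (x : F) : F :=
  \sum_(i < n) x ^+ (2 ^ i).

(* Its value in F_2 = {0,1}, encoded as a boolean (true = 1). *)
Definition trb (F : finFieldType) (n : nat) (x : F) : bool := trace n x == 1.

(* Boolean functions are F -> bool, addition in F_2 is xor (addb). *)
Definition walsh (F : finFieldType) (n : nat) (f : F -> bool) (a : F) : int :=
  \sum_(x : F) (-1) ^+ (f x (+) trb n (a * x)).

(* f is bent with dual fs: W_f(a) = 2^(n/2) (-1)^{fs(a)} for all a (n = 2k). *)
Definition bent_with_dual (F : finFieldType) (n k : nat) (f fs : F -> bool) : Prop :=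
  forall a : F, walsh n f a = (2 ^+ k) * (-1) ^+ (fs a).

Definition Dder (F : finFieldType) (a : F) (f : F -> bool) : F -> bool :=
  fun x => f x (+) f (x + a).

(* Reduced polynomial sum_{I subset {1..tau}} c_I prod_{i in I} X_i over F_2,
   given by its coefficient family c, evaluated at X : 'I_tau -> F_2. *)
Definition reduced_eval (tau : nat) (c : {set 'I_tau} -> bool)
  (X : 'I_tau -> bool) : bool :=
  \big[addb/false]_(I : {set 'I_tau}) (c I && [forall i in I, X i]).

(* Main.v *)
Require Import Defs.
From mathcomp Require Import all_boot all_order all_algebra all_field.
Import GRing.Theory Num.Theory.
Local Open Scope ring_scope.

Section Char2.
Variable F : finFieldType.
Hypothesis ch2 : (2%N \in [pchar F]).

Lemma c2 (x : F) : x + x = 0.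
Proof. exact: addrr_pchar2. Qed.

Lemma frobD (i : nat) (x y : F) : (x + y) ^+ (2 ^ i) = x ^+ (2 ^ i) + y ^+ (2 ^ i).
Proof.
elim: i => [|i IH]; first by rewrite !expr1.
rewrite expnS mulnC !exprM IH sqrrD.
by rewrite mulr2n c2 addr0 -!exprM.
Qed.

Lemma traceD n (x y : F) : trace n (x + y) = trace n x + trace n y.
Proof. by rewrite /trace -big_split; apply: eq_bigr => i _; rewrite frobD. Qed.

Lemma trace0 n : trace n (0 : F) = 0.
Proof. by rewrite /trace big1 // => i _; rewrite expr0n expn_eq0. Qed.

Lemma trace01 n (x : F) : #|F| = (2 ^ n)%N -> trace n x = 0 \/ trace n x = 1.
Proof.
move=> hF.
have: trace n x ^+ 2 = trace n x.
  rewrite /trace.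
  have -> : forall m (f : 'I_m -> F), (\sum_(i < m) f i) ^+ 2 = \sum_(i < m) (f i) ^+ 2.
    move=> m f; elim/big_ind2: _ => //; first by rewrite expr2 mul0r.
    by move=> a b c d <- <-; rewrite (frobD 1).
  under eq_bigr => i _ do rewrite -exprM -expnSr.
  case: n hF => [|n] hF; first by rewrite !big_ord0.
  rewrite big_ord_recr /= big_ord_recl /= -hF expf_card expn0 expr1 addrC.
  congr (_ + _); apply: eq_bigr => i _; by [].
move=> /eqP; rewrite expr2 -subr_eq0 -{3}[trace n x]mulr1 -mulrBr mulf_eq0 subr_eq0.
by case/orP => /eqP ->; [left|right].
Qed.

Lemma trbD n (x y : F) : #|F| = (2 ^ n)%N -> trb n (x + y) = trb n x (+) trb n y.
Proof.
move=> hF; rewrite /trb traceD.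
have h01 : (0 == 1 :> F) = false by rewrite eq_sym oner_eq0.
case: (@trace01 n x hF) => ->; case: (@trace01 n y hF) => ->;
  by rewrite ?addr0 ?add0r ?c2 ?eqxx ?h01.
Qed.

Lemma trb0 n : trb n (0 : F) = false.
Proof. by rewrite /trb trace0 eq_sym (negbTE (oner_neq0 _)). Qed.

End Char2.

Section Main.
Variable tau : nat.
Definition dot (v y : {ffun 'I_tau -> bool}) : bool := \big[addb/false]_i (v i && y i).

Lemma sg0 : ((-1) ^+ false : int) = 1. Proof. by []. Qed.

Lemma sgdot v y : ((-1) ^+ dot v y : int) = \prod_i (-1) ^+ (v i && y i).
Proof. by rewrite /dot (big_morph (fun b : bool => (-1) ^+ b : int) (@signr_addb _) sg0). Qed.

Lemma orth (w : {ffun 'I_tau -> bool}) :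
  \sum_(v : {ffun 'I_tau -> bool}) ((-1) ^+ dot v w : int) = \prod_i ((-1) ^+ w i + 1).
Proof.
rewrite (eq_bigr _ (fun v _ => sgdot v w)).
rewrite -(bigA_distr_bigA (fun i b => (-1) ^+ (b && w i) : int)).
by apply: eq_bigr => i _; rewrite big_bool.
Qed.

Lemma inversion (P : {ffun 'I_tau -> bool} -> bool) (y : {ffun 'I_tau -> bool}) :
  \sum_v (\sum_z ((-1) ^+ P z : int) * (-1) ^+ dot v z) * (-1) ^+ dot v y
  = 2 ^+ tau * (-1) ^+ P y.
Proof.
transitivity (\sum_v \sum_z ((-1) ^+ P z : int) * (-1) ^+ dot v z * (-1) ^+ dot v y).
  apply: eq_bigr => v _. by rewrite mulr_suml.
rewrite exchange_big /=.
have E : forall z v, ((-1) ^+ P z : int) * (-1) ^+ dot v z * (-1) ^+ dot v y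
    = (-1) ^+ P z * (-1) ^+ dot v [ffun i => z i (+) y i].
  move=> z v.
  have D : dot v z (+) dot v y = dot v [ffun i => z i (+) y i].
    rewrite /dot; transitivity (\big[addb/false]_i ((v i && z i) (+) (v i && y i))).
      by rewrite big_split.
    by apply: eq_bigr => i _; rewrite ffunE; case: (v i); case: (z i); case: (y i).
  by rewrite -mulrA -[X in _ * X = _]signr_addb D.
rewrite (eq_bigr (fun z => (-1) ^+ P z * \prod_i ((-1) ^+ [ffun i => z i (+) y i] i + 1))); last first.
  by move=> z _; rewrite (eq_bigr _ (fun v _ => E z v)) -mulr_sumr orth.
rewrite (bigD1 y) //= [X in _ + X]big1 ?addr0.
  rewrite mulrC; congr (_ * _).
  rewrite (eq_bigr (fun _ => 2)) ?prodr_const ?card_ord // => i _.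
  by rewrite ffunE addbb.
move=> z /eqP zy.
have [i hi] : exists i, z i != y i.
  apply/existsP; rewrite -negb_forall; apply/negP => /forallP h.
  by apply: zy; apply/ffunP => i; apply/eqP.
by rewrite (bigD1 i) //= ffunE; move: hi; case: (z i); case: (y i) => // _; rewrite /= expr1 addNr mul0r mulr0.
Qed.
End Main.
Arguments dot {tau}.

From mathcomp Require Import ring.

Section Walsh.
Variables (F : finFieldType) (n k : nat).
Hypothesis hF : #|F| = (2 ^ n)%N.
Variables (g gs : F -> bool).
Hypothesis hbent : bent_with_dual n k g gs.
Variables (tau : nat) (u : 'I_tau -> F).
Hypothesis hP : forall i j : 'I_tau, (i < j)%N ->
          forall x : F, Dder (u i) (Dder (u j) gs) x = false.

Lemma ch2 : (2%N \in [pchar F]).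
Proof. by apply: (card_finPcharP hF). Qed.

Lemma key i j x : Dder (u i) gs (x + u j) = Dder (u i) gs x.
Proof.
rewrite /Dder.
case: (ltngtP i j) => [lt|gt|eq].
- move: (@hP i j lt x); rewrite /Dder [x + u j + u i]addrAC.
  by case: (gs x); case: (gs (x + u i)); case: (gs (x + u j)); case: (gs (x + u i + u j)).
- move: (@hP j i gt x); rewrite /Dder.
  by case: (gs x); case: (gs (x + u i)); case: (gs (x + u j)); case: (gs (x + u j + u i)).
- have -> : j = i by apply: ord_inj.
  rewrite -addrA (@c2 F ch2) addr0 addbC //.
Qed.

Lemma Usum (s : seq 'I_tau) (v : 'I_tau -> bool) x :
  trb n ((\sum_(i <- s) (if v i then u i else 0)) * x)
  = \big[addb/false]_(i <- s) (v i && trb n (u i * x)).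
Proof.
elim: s => [|j s IH]; first by rewrite !big_nil mul0r (@trb0 F n).
rewrite !big_cons mulrDl (@trbD F ch2 n _ _ hF) IH.
by case: (v j) => //=; rewrite mul0r (@trb0 F n).
Qed.

Lemma gsU (s : seq 'I_tau) (v : 'I_tau -> bool) a :
  gs (a + \sum_(i <- s) (if v i then u i else 0))
  = gs a (+) \big[addb/false]_(i <- s) (v i && Dder (u i) gs a).
Proof.
elim: s a => [|j s IH] a; first by rewrite !big_nil addr0 addbF.
rewrite !big_cons addrA IH.
case: (v j) => /=; last by rewrite addr0.
rewrite [in LHS](eq_bigr (fun i => v i && Dder (u i) gs a)); last by move=> i _; rewrite key.
by rewrite /Dder !addbA addbb addFb.
Qed.

Lemma mainW (P : {ffun 'I_tau -> bool} -> bool) a :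
  walsh n (fun x => g x (+) P [ffun i => trb n (u i * x)]) a
  = 2 ^+ k * (-1) ^+ (gs a (+) P [ffun i => Dder (u i) gs a]).
Proof.
have h2 : (2 : int) ^+ tau != 0 by rewrite expf_neq0.
apply: (mulfI h2).
pose H (v : {ffun 'I_tau -> bool}) := \sum_(z : {ffun 'I_tau -> bool}) ((-1) ^+ P z : int) * (-1) ^+ dot v z.
pose U (v : {ffun 'I_tau -> bool}) := \sum_i (if v i then u i else 0).
rewrite /walsh mulr_sumr.
transitivity (\sum_x ((-1) ^+ (g x (+) trb n (a * x)) : int) *
   \sum_v H v * (-1) ^+ dot v [ffun i => trb n (u i * x)]).
  apply: eq_bigr => x _; rewrite inversion !signr_addb; ring.
under eq_bigr => x _ do rewrite mulr_sumr.
rewrite exchange_big /=.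
transitivity (\sum_v H v * walsh n g (a + U v)).
  apply: eq_bigr => v _; rewrite /walsh mulr_sumr; apply: eq_bigr => x _.
  have -> : dot v [ffun i => trb n (u i * x)] = trb n (U v * x).
    by rewrite /U Usum /dot; apply: eq_bigr => i _; rewrite ffunE.
  rewrite mulrDl (@trbD F ch2 n _ _ hF) !signr_addb; ring.
transitivity (\sum_v H v * (2 ^+ k * ((-1) ^+ gs a * (-1) ^+ dot v [ffun i => Dder (u i) gs a]))).
  apply: eq_bigr => v _; rewrite hbent /U gsU signr_addb.
  have -> : \big[addb/false]_(i <- index_enum 'I_tau) (v i && Dder (u i) gs a)
     = dot v [ffun i => Dder (u i) gs a].
    by rewrite /dot; apply: eq_bigr => i _; rewrite ffunE.
  by [].
transitivity (2 ^+ k * (-1) ^+ gs a * \sum_v H v * (-1) ^+ dot v [ffun i => Dder (u i) gs a]).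
  rewrite mulr_sumr; apply: eq_bigr => v _; ring.
rewrite inversion signr_addb; ring.
Qed.

End Walsh.

Lemma reval_ext tau (c : {set 'I_tau} -> bool) (X X' : 'I_tau -> bool) :
  (forall i, X i = X' i) -> reduced_eval c X = reduced_eval c X'.
Proof.
move=> h; rewrite /reduced_eval; apply: eq_bigr => I _; congr (_ && _).
by apply: eq_forallb => i; rewrite h.
Qed.

Theorem theorem4 (F : finFieldType) (n k : nat) (hn : n = (2 * k)%N)
  (hF : #|F| = (2 ^ n)%N) (g gs : F -> bool)
  (hbent : bent_with_dual n k g gs)
  (tau : nat) (u : 'I_tau -> F) (hu : injective u)
  (hP : forall i j : 'I_tau, (i < j)%N ->
          forall x : F, Dder (u i) (Dder (u j) gs) x = false)
  (c : {set 'I_tau} -> bool) :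
  bent_with_dual n k
    (fun x => g x (+) reduced_eval c (fun i => trb n (u i * x)))
    (fun x => gs x (+) reduced_eval c (fun i => Dder (u i) gs x)).
Proof.
move=> a.
have R : forall X : 'I_tau -> bool,
    reduced_eval c [ffun i => X i] = reduced_eval c X.
  by move=> X; apply: reval_ext => i; rewrite ffunE.
have E1 : walsh n (fun x => g x (+) reduced_eval c (fun i => trb n (u i * x))) a
   = walsh n (fun x => g x (+) reduced_eval c [ffun i => trb n (u i * x)]) a.
  rewrite /walsh; apply: eq_bigr => x _.
  by rewrite (R (fun i => trb n (u i * x))).
have M := (@mainW F n k hF g gs hbent tau u hP (fun y => reduced_eval c y) a).
cbv beta in M; rewrite E1 M.
by rewrite (R (fun i => Dder (u i) gs a)).
Qed.
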